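(* Let $x\in\mathbb{R}^n$, $\Delta>0$, $p=(n+1)(n+2)/2$, and take the $p$ points $x$; $x+\Delta e_i$ ($i=1,\ldots,n$); $x-\Delta e_i$ ($i=1,\ldots,n$); $x+\Delta(e_i+e_j)$ ($1\le i<j\le n$). Let $\hat Q\in\mathbb{R}^{p\times p}$ be the matrix whose rows are $\phi(\hat s)^T$ for $\hat s=(y-x)/\Delta$ ranging over these points $y$. Then $\|\hat Q^{-1}\|_\infty\le 8$.
   Context: $e_i$ is the $i$-th coordinate vector. $\phi:\mathbb{R}^n\to\mathbb{R}^p$ is the natural quadratic basis $\phi(z)=[1,z_1,\ldots,z_n,\tfrac12z_1^2,z_1z_2,\ldots,z_1z_n,\tfrac12z_2^2,z_2z_3,\ldots,z_{n-1}z_n,\tfrac12z_n^2]^T$. $\|A\|_\infty$ is the maximum absolute row sum. *)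

(* Defs.v *)
From HB Require Import structures.
From mathcomp Require Import all_boot all_order all_algebra.
Set Implicit Arguments. Unset Strict Implicit. Unset Printing Implicit Defensive.
Import Order.TTheory GRing.Theory Num.Theory.
Local Open Scope ring_scope.

Section Defs.
Variable R : realFieldType.
Variable n : nat.

Definition pdim : nat := ((n.+1 * n.+2) %/ 2)%N.

Definition coord_vec (i : 'I_n) : 'rV[R]_n := delta_mx 0 i.

(* natural quadratic basis
   phi(z) = [1, z_1..z_n, 1/2 z_1^2, z_1 z_2, .., z_1 z_n, 1/2 z_2^2, z_2 z_3, .., 1/2 z_n^2] *)
Definition phi (z : 'rV[R]_n) : seq R :=
  1 :: [seq z 0 i | i <- enum 'I_n] ++
  flatten [seq [seq (if i == j then z 0 i ^+ 2 / 2 else z 0 i * z 0 j)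
               | j : 'I_n <- [seq j : 'I_n <- enum 'I_n | (nat_of_ord i <= nat_of_ord j)%N]] | i <- enum 'I_n].

Definition sample_points (x : 'rV[R]_n) (D : R) : seq 'rV[R]_n :=
  [:: x] ++ [seq x + D *: coord_vec i | i <- enum 'I_n]
         ++ [seq x - D *: coord_vec i | i <- enum 'I_n]
         ++ flatten [seq [seq x + D *: (coord_vec i + coord_vec j)
                         | j : 'I_n <- [seq j : 'I_n <- enum 'I_n | (nat_of_ord i < nat_of_ord j)%N]] | i <- enum 'I_n].

Definition Qhat (x : 'rV[R]_n) (D : R) : 'M[R]_pdim :=
  \matrix_(r < pdim, c < pdim)
     nth 0 (phi (D^-1 *: (nth 0 (sample_points x D) r - x))) c.

End Defs.

Definition mx_norm_inf (R : realFieldType) (m k : nat) (A : 'M[R]_(m, k)) : R :=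
  \big[Num.max/0]_(i < m) \sum_(j < k) `|A i j|.

(* Main.v *)
Require Import Defs.
From HB Require Import structures.
From mathcomp Require Import all_boot all_order all_algebra.
From mathcomp Require Import zify ring lra.
Import Order.TTheory GRing.Theory Num.Theory.
Local Open Scope ring_scope.
Set Implicit Arguments. Unset Strict Implicit.

Definition plab n := option (('I_n + 'I_n) + ('I_n * 'I_n))%type.
Definition blab n := option ('I_n + ('I_n * 'I_n))%type.

Definition pl n : seq (plab n) :=
  None :: [seq Some (inl (inl i)) | i <- enum 'I_n]
       ++ [seq Some (inl (inr i)) | i <- enum 'I_n]
       ++ [seq Some (inr (i, j)) | i <- enum 'I_n, j <- [seq j : 'I_n <- enum 'I_n | (nat_of_ord i < nat_of_ord j)%N]].
Definition bl n : seq (blab n) :=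
  None :: [seq Some (inl i) | i <- enum 'I_n]
       ++ [seq Some (inr (i, j)) | i <- enum 'I_n, j <- [seq j : 'I_n <- enum 'I_n | (nat_of_ord i <= nat_of_ord j)%N]].

Definition ptv (R : realFieldType) n (l : plab n) : 'rV[R]_n :=
  match l with
  | None => 0
  | Some (inl (inl i)) => coord_vec R i
  | Some (inl (inr i)) => - coord_vec R i
  | Some (inr (i, j)) => coord_vec R i + coord_vec R j
  end.

Definition evalb (R : realFieldType) n (z : 'rV[R]_n) (b : blab n) : R :=
  match b with
  | None => 1
  | Some (inl i) => z 0 i
  | Some (inr (i, j)) => if i == j then z 0 i ^+ 2 / 2 else z 0 i * z 0 j
  end.

Lemma phiE (R : realFieldType) n (z : 'rV[R]_n) : phi z = map (evalb z) (bl n).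
Proof.
rewrite /phi /bl /= map_cat map_flatten -!map_comp; congr (_ :: _ ++ _).
congr flatten; apply: eq_map => i /=; rewrite -map_comp; apply: eq_map => j //.
Qed.

Lemma spE (R : realFieldType) n (x : 'rV[R]_n) D :
  sample_points x D = map (fun l => x + D *: ptv R l) (pl n).
Proof.
rewrite /sample_points /pl /= !map_cat map_flatten -!map_comp scaler0 addr0.
congr (_ :: _ ++ _ ++ _).
  by apply: eq_map => i /=; rewrite scalerN.
congr flatten; apply: eq_map => i /=; rewrite -map_comp; apply: eq_map => j //.
Qed.

Lemma count_iota_gt i n : count (fun k => (i < k)%N) (iota 0 n) = (n - i.+1)%N.
Proof.
elim: n => [|n IH] //; rewrite -[n.+1]addn1 iotaD count_cat IH /= addn0.
case: ltnP => h; rewrite ?addn0 ?addn1; lia.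
Qed.
Lemma count_iota_ge i n : count (fun k => (i <= k)%N) (iota 0 n) = (n - i)%N.
Proof.
elim: n => [|n IH] //; rewrite -[n.+1]addn1 iotaD count_cat IH /= addn0.
case: leqP => h; rewrite ?addn0 ?addn1; lia.
Qed.

Lemma iota1 n : iota 1 n = map succn (iota 0 n).
Proof. have := iotaDl 1 0 n; rewrite addn0 => ->; apply: eq_map => x; by rewrite add1n. Qed.

Lemma sumA n : (2 * sumn [seq (n - i.+1)%N | i <- iota 0 n] = n * n - n)%N.
Proof.
elim: n => [|n IH] //.
rewrite /= iota1 -map_comp.
have -> : [seq ((fun i => n.+1 - i.+1) \o succn) x | x <- iota 0 n]%N = [seq (n - x.+1)%N | x <- iota 0 n].
  by apply: eq_map => x; rewrite /= subSS.
rewrite mulnDr IH; nia.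
Qed.
Lemma sumB n : (2 * sumn [seq (n - i)%N | i <- iota 0 n] = n * n + n)%N.
Proof.
elim: n => [|n IH] //.
rewrite /= iota1 -map_comp.
have -> : [seq ((fun i => n.+1 - i) \o succn) x | x <- iota 0 n]%N = [seq (n - x)%N | x <- iota 0 n].
  by apply: eq_map => x; rewrite /= subSS.
rewrite mulnDr IH; nia.
Qed.

Lemma size_pl n : size (pl n) = pdim n.
Proof.
rewrite /pl /= !size_cat !size_map size_allpairs_dep -enumT size_enum_ord.
have -> : [seq size [seq j : 'I_n <- enum 'I_n | (nat_of_ord i < nat_of_ord j)%N] | i <- enum 'I_n]
   = [seq (n - i.+1)%N | i <- iota 0 n].
  rewrite -val_enum_ord -map_comp; apply: eq_map => i /=.
  by rewrite size_filter -(count_map val (fun k => (nat_of_ord i < k)%N)) val_enum_ord count_iota_gt.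
have := sumA n; rewrite /pdim; set S := sumn _ => hS.
have -> : (n.+1 * n.+2 = (n + (n + S)).+1 * 2)%N by nia.
by rewrite mulnK.
Qed.

Lemma size_bl n : size (bl n) = pdim n.
Proof.
rewrite /bl /= !size_cat !size_map size_allpairs_dep -enumT size_enum_ord.
have -> : [seq size [seq j : 'I_n <- enum 'I_n | (nat_of_ord i <= nat_of_ord j)%N] | i <- enum 'I_n]
   = [seq (n - i)%N | i <- iota 0 n].
  rewrite -val_enum_ord -map_comp; apply: eq_map => i /=.
  by rewrite size_filter -(count_map val (fun k => (nat_of_ord i <= k)%N)) val_enum_ord count_iota_ge.
have := sumB n; rewrite /pdim; set S := sumn _ => hS.
have -> : (n.+1 * n.+2 = (n + S).+1 * 2)%N by nia.
by rewrite mulnK.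
Qed.

Lemma uniq_pl n : uniq (pl n).
Proof.
rewrite /pl cons_uniq !mem_cat !negb_or !cat_uniq.
rewrite !map_inj_uniq ?enum_uniq //; last 2 first.
- by move=> a b [].
- by move=> a b [].
rewrite allpairs_uniq_dep ?enum_uniq //; last first.
- by move=> [a b] [c d] _ _ /= [-> ->].
- by move=> i _; rewrite filter_uniq ?enum_uniq.
rewrite -!enumT !enum_uniq /= !andbT.
apply/and3P; split.
- apply/and3P; split; apply/negP; [by case/mapP|by case/mapP|by case/allpairsPdep => ? [? [? ? ?]]].
- apply/hasPn => y; rewrite mem_cat => /orP[] => [/mapP[a _ ->]|/allpairsPdep[a [b [_ _ ->]]]];
  by apply/negP => /mapP[c _].
- by apply/hasPn => y /allpairsPdep[a [b [_ _ ->]]]; apply/negP => /mapP[c _].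
Qed.

Lemma uniq_bl n : uniq (bl n).
Proof.
rewrite /bl cons_uniq !mem_cat !negb_or !cat_uniq.
rewrite !map_inj_uniq ?enum_uniq //; last by move=> a b [].
rewrite allpairs_uniq_dep ?enum_uniq //; last first.
- by move=> [a b] [c d] _ _ /= [-> ->].
- by move=> i _; rewrite filter_uniq ?enum_uniq.
rewrite -!enumT !enum_uniq /= !andbT.
apply/andP; split; first (apply/andP; split; apply/negP; [by case/mapP|by case/allpairsPdep => ? [? [? ? ?]]]).
by apply/hasPn => y /allpairsPdep[a [b [_ _ ->]]]; apply/negP => /mapP[c _].
Qed.

Definition okb n (b : blab n) : bool :=
  match b with Some (inr (i, j)) => (nat_of_ord i <= nat_of_ord j)%N | _ => true end.

Lemma bl_ok n b : b \in bl n -> okb b.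
Proof.
rewrite /bl inE mem_cat => /orP[/eqP -> //|/orP[/mapP[i _ -> //]|]].
by case/allpairsPdep => i [j [_ + ->]]; rewrite mem_filter => /andP[].
Qed.

Definition coeffs (R : realFieldType) n (b : blab n) : seq (R * plab n) :=
  match b with
  | None => [:: (1, None)]
  | Some (inl i) => [:: (2^-1, Some (inl (inl i))); (- 2^-1, Some (inl (inr i)))]
  | Some (inr (i, j)) => if i == j then
        [:: (1, Some (inl (inl i))); (1, Some (inl (inr i))); (-2, None)]
      else [:: (1, Some (inr (i, j))); (-1, Some (inl (inl i))); (-1, Some (inl (inl j))); (1, None)]
  end.

Lemma coeffs_all (R : realFieldType) n (b : blab n) :
  okb b -> all (fun k => k.2 \in pl n) (coeffs R b).
Proof.
have h1 i : Some (inl (inl i)) \in pl n by rewrite /pl inE !mem_cat map_f ?mem_enum ?orbT.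
have h2 i : Some (inl (inr i)) \in pl n by rewrite /pl inE !mem_cat map_f ?mem_enum ?orbT.
have h0 : None \in pl n by rewrite inE eqxx.
case: b => [[i|[i j]]|] /=.
- by rewrite h1 h2.
- case: (eqVneq i j) => [<-|ne] ij /=; first by rewrite h1 h2.
  rewrite h1 h1 ?h0 !andbT.
  rewrite /pl inE !mem_cat; apply/orP; right; apply/orP; right; apply/orP; right.
  apply/allpairsPdep; exists i, j; split; rewrite ?mem_enum ?mem_filter ?mem_enum ?andbT //.
  by rewrite ltn_neqAle ij -enumT mem_enum !andbT; exact: ne.
- by rewrite ?h0.
Qed.

Lemma coordE (R : realFieldType) n (i k : 'I_n) : coord_vec R i 0 k = (i == k)%:R.
Proof. by rewrite /coord_vec mxE eqxx /= eq_sym. Qed.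

Lemma someE (T : eqType) (x y : T) : (Some x == Some y) = (x == y). Proof. by []. Qed.
Lemma inlE (T U : eqType) (x y : T) : (@inl T U x == inl y) = (x == y). Proof. by []. Qed.
Lemma inrE (T U : eqType) (x y : U) : (@inr T U x == inr y) = (x == y). Proof. by []. Qed.
Lemma inlrE (T U : eqType) (x : T) (y : U) : (inl x == inr y) = false. Proof. by []. Qed.
Lemma inrlE (T U : eqType) (x : T) (y : U) : (inr y == inl x) = false. Proof. by []. Qed.

Ltac splt := repeat match goal with |- context[(?x == ?y)] =>
  match type of x with ordinal _ => idtac | Equality.sort (fintype_ordinal__canonical__eqtype_Equality _) => idtac end;
  let H := fresh "H" in case: (eqVneq x y) => H;
  [subst x; rewrite ?eqxx |
   let H1 := fresh "H" in let H2 := fresh "H" in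
   move/negbTE: (H) => H1; rewrite eq_sym in H; move/negbTE: (H) => H2; rewrite ?H1 ?H2] end.

Lemma key (R : realFieldType) n (b b' : blab n) : okb b -> okb b' ->
  \sum_(k <- coeffs R b) k.1 * evalb (ptv R k.2) b' = (b == b')%:R.
Proof.
case: b => [[i|[i j]]|]; case: b' => [[a|[a c]]|] //= h1 h2;
  rewrite ?big_cons ?big_nil /= ?mxE ?coordE ?someE ?inlE ?inrE ?inlrE ?inrlE ?xpair_eqE.
all: try case: (eqVneq i j) => [<-|ne] /=; rewrite ?big_cons ?big_nil /= ?mxE ?coordE.
all: splt.
all: rewrite ?big_cons ?big_nil /= ?mxE ?coordE.
all: splt.
all: rewrite /= ?eqxx /=.
all: try (match goal with H : is_true (?x != ?x) |- _ => by rewrite eqxx in H end).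
all: try (by lra).
all: by move: ne; rewrite eqE /= eqn_leq h1 h2.
Qed.

Definition w (R : realFieldType) n (b : blab n) (l : plab n) : R :=
  \sum_(k <- coeffs R b) k.1 * (l == k.2)%:R.

Lemma sum_count (R : realFieldType) (T : eqType) (s : seq T) a (g : T -> R) :
  \sum_(l <- s) (l == a)%:R * g l = (count_mem a s)%:R * g a.
Proof.
elim: s => [|x s IH]; rewrite ?big_nil ?big_cons /= ?mul0r // IH natrD mulrDl.
by case: eqP => [->|_]; rewrite ?mul1r ?mul0r ?add0r.
Qed.

Lemma sumgen (R : realFieldType) n (c : seq (R * plab n)) (f : R * plab n -> R) (g : plab n -> R) :
  all (fun k => k.2 \in pl n) c ->
  \sum_(l <- pl n) (\sum_(k <- c) f k * (l == k.2)%:R) * g l = \sum_(k <- c) f k * g k.2.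
Proof.
move=> /allP hc.
under eq_bigr => l _ do rewrite mulr_suml.
rewrite exchange_big /=; apply: eq_big_seq => k kin.
under eq_bigr => l _ do rewrite -mulrA.
by rewrite -mulr_sumr sum_count count_uniq_mem ?uniq_pl // hc // mul1r.
Qed.

Lemma normw (R : realFieldType) n (b : blab n) : okb b ->
  \sum_(l <- pl n) `|w R b l| <= \sum_(k <- coeffs R b) `|k.1|.
Proof.
move=> ok.
have := sumgen (fun k => `|k.1|) (fun _ => 1) (coeffs_all R ok).
under eq_bigr => l _ do rewrite mulr1.
under [X in _ = X -> _]eq_bigr => l _ do rewrite mulr1.
move=> <-; apply: ler_sum => l _; rewrite /w.
apply: le_trans (ler_norm_sum _ _ _) _; apply: ler_sum => k _.
by rewrite normrM normr_nat.
Qed.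

Lemma coeffs_norm (R : realFieldType) n (b : blab n) :
  \sum_(k <- coeffs R b) `|k.1| <= 8.
Proof.
case: b => [[i|[i j]]|] /=; rewrite ?big_cons ?big_nil /=.
- rewrite normrN normfV normr_nat; lra.
- case: eqP => _; rewrite ?big_cons ?big_nil /= ?normrN ?normr1 ?normr_nat; lra.
- rewrite normr1; lra.
Qed.

Lemma QhatE (R : realFieldType) n (x : 'rV[R]_n) D (r c : 'I_(pdim n)) : 0 < D ->
  Qhat x D r c = evalb (ptv R (nth None (pl n) r)) (nth None (bl n) c).
Proof.
move=> D0; rewrite mxE spE (nth_map None) ?size_pl //.
rewrite [x + _]addrC addrK scalerA mulVf ?gt_eqF // scale1r.
by rewrite phiE (nth_map None) ?size_bl.
Qed.

Unset Implicit Arguments. Set Strict Implicit.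

Theorem lemma5p6 (R : realFieldType) (n : nat) (x : 'rV[R]_n) (D : R) :
  0 < D ->
  Qhat x D \in unitmx /\ mx_norm_inf (invmx (Qhat x D)) <= 8.
Proof.
move=> D0.
pose B := \matrix_(c < pdim n, r < pdim n) w R (nth None (bl n) c) (nth None (pl n) r).
have okc (c : 'I_(pdim n)) : okb (nth None (bl n) c).
  by apply: bl_ok; rewrite mem_nth // size_bl.
have BQ : B *m Qhat x D = 1%:M.
  apply/matrixP => c c'; rewrite !mxE.
  have -> : \sum_j B c j * Qhat x D j c' =
     \sum_(l <- pl n) w R (nth None (bl n) c) l * evalb (ptv R l) (nth None (bl n) c').
    rewrite (big_nth None) size_pl big_mkord; apply: eq_bigr => r _.
    by rewrite QhatE // mxE.
  rewrite sumgen ?coeffs_all // key // nth_uniq ?size_bl ?uniq_bl //.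
have [_ QU] := mulmx1_unit BQ.
have invE : invmx (Qhat x D) = B.
  by rewrite -[invmx _]mul1mx -BQ -mulmxA mulmxV // mulmx1.
split => //; rewrite invE /mx_norm_inf.
apply: bigmax_le => // c _.
have -> : \sum_j `|B c j| = \sum_(l <- pl n) `|w R (nth None (bl n) c) l|.
  by rewrite (big_nth None) size_pl big_mkord; apply: eq_bigr => r _; rewrite mxE.
exact: le_trans (normw R (okc c)) (coeffs_norm _ _).
Qed.
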